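(* Let $Q\ge1$ and $\Omega_Q=\{(x,y)\in\mathbb R^2:\ x>0,\ y>0,\ xy\le Q\}$. Let $\mathcal B(x,y)=128Q^{3/2}(xy)^{1/2}-(xy)^2$ and, for $X_0\in\Omega_Q$, $\mathcal B_{X_0}(X)=\mathcal B(X)-\mathcal B'(X_0)(X-X_0)$, where $\mathcal B'(X_0)$ is the gradient of $\mathcal B$ at $X_0$. Then (1) $0\le\mathcal B(X)\le 128Q^2$ for all $X\in\Omega_Q$; (2) for all $X_0=(x_0,y_0)$, $X=(x,y)$ in $\Omega_Q$, $$\mathcal B_{X_0}(X_0)-\mathcal B_{X_0}(X)\ge c\,|x-x_0|^2\,y\,y_0,$$ where $c$ is an absolute constant. *)

(* Defs.v *)
From Stdlib Require Import Reals.
From Coquelicot Require Import Coquelicot.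
Open Scope R_scope.

Definition OmegaQ (Q x y : R) : Prop := 0 < x /\ 0 < y /\ x * y <= Q.

Definition Bfun (Q x y : R) : R :=
  128 * Rpower Q (3 / 2) * sqrt (x * y) - (x * y) ^ 2.

Definition dBx (Q x0 y0 : R) : R := Derive (fun x => Bfun Q x y0) x0.
Definition dBy (Q x0 y0 : R) : R := Derive (fun y => Bfun Q x0 y) y0.

Definition BX0 (Q x0 y0 x y : R) : R :=
  Bfun Q x y - (dBx Q x0 y0 * (x - x0) + dBy Q x0 y0 * (y - y0)).

(* Main.v *)
Require Import Defs.
From Stdlib Require Import Reals Lra Psatz.
From Coquelicot Require Import Coquelicot.
Open Scope R_scope.

Lemma dBx_val Q x0 y0 : 0 < x0 -> 0 < y0 ->
  dBx Q x0 y0 = 128 * Rpower Q (3/2) * (y0 / (2 * sqrt (x0*y0))) - 2 * (x0*y0) * y0.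
Proof.
intros hx hy. unfold dBx, Bfun. apply is_derive_unique.
auto_derive. nra. simpl. field. apply Rgt_not_eq, sqrt_lt_R0. nra.
Qed.

Lemma dBy_val Q x0 y0 : 0 < x0 -> 0 < y0 ->
  dBy Q x0 y0 = 128 * Rpower Q (3/2) * (x0 / (2 * sqrt (x0*y0))) - 2 * (x0*y0) * x0.
Proof.
intros hx hy. unfold dBy, Bfun. apply is_derive_unique.
auto_derive. nra. simpl. field. apply Rgt_not_eq, sqrt_lt_R0. nra.
Qed.

Lemma Rp32 Q : 0 < Q -> Rpower Q (3/2) = (sqrt Q)^3.
Proof.
intros hQ. rewrite <- Rpower_sqrt by lra.
rewrite <- Rpower_pow by (apply exp_pos).
rewrite Rpower_mult. f_equal. simpl. field.
Qed.

Lemma core g d b M : 0 < g -> 0 < b -> 1 <= M -> g^3 <= M ->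
  (b^2 <= 4*d^2 \/ b^2 <= 2*g) ->
  64*M*d^2 + (g-1)^2*(g^2+2*g+3) - 2*d^2 >= /4 * (g*d + b*(g-1))^2.
Proof.
intros gp hb hM hg H.
assert (H3 : g^2 <= M).
{ destruct (Rle_dec g 1). nra. nra. }
assert (H4 : (g-1)^2 <= M).
{ destruct (Rle_dec g 1). nra. nra. }
assert (e1 : 0 <= (g-1)^2) by apply pow2_ge_0.
assert (e2 : 0 <= d^2) by apply pow2_ge_0.
assert (H5 : b^2*(g-1)^2 <= 4*M*d^2 + 2*(g-1)^2*(g^2+2*g+3)).
{ destruct H as [H|H].
  - assert (b^2*(g-1)^2 <= 4*d^2*(g-1)^2) by nra. nra.
  - assert (b^2*(g-1)^2 <= 2*g*(g-1)^2) by nra. nra. }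
assert (0 <= (g-1)^2*(g^2+2*g+3)) by nra.
assert ((g*d + b*(g-1))^2 <= 2*(g^2*d^2) + 2*(b^2*(g-1)^2)) by (pose proof (pow2_ge_0 (g*d - b*(g-1))); nra).
assert (g^2*d^2 <= M*d^2) by nra.
nra.
Qed.

Lemma key a b M : 0 < a -> 0 < b -> 1 <= M -> (a*b)^3 <= M ->
  64*M*(a-b)^2 + ((a*b)^4 + 3 - 2*a^2 - 2*b^2) >= /4 * ((a^2-1)*b)^2.
Proof.
intros ha hb hM hg.
assert (H1 : (a^2-1)*b = (a*b)*(a-b) + b*(a*b-1)) by ring.
assert (H2 : (a*b)^4 + 3 - 2*a^2 - 2*b^2 = (a*b-1)^2*((a*b)^2+2*(a*b)+3) - 2*(a-b)^2)
  by ring.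
assert (H5b : b^2 <= 4*(a-b)^2 \/ b^2 <= 2*(a*b)).
{ destruct (Rle_dec (2*a) b). left; nra. right; nra. }
rewrite H1, H2.
pose proof (core (a*b) (a-b) b M ltac:(nra) hb hM hg H5b). lra.
Qed.

Lemma sq_eq z : 0 <= z -> z = (sqrt z)^2.
Proof. intros h. simpl. rewrite Rmult_1_r, sqrt_sqrt; lra. Qed.

Theorem lemma5p3 :
  (forall Q x y : R, 1 <= Q -> OmegaQ Q x y ->
     0 <= Bfun Q x y /\ Bfun Q x y <= 128 * Q ^ 2) /\
  (exists c : R, 0 < c /\
     forall Q x0 y0 x y : R, 1 <= Q -> OmegaQ Q x0 y0 -> OmegaQ Q x y ->
       BX0 Q x0 y0 x0 y0 - BX0 Q x0 y0 x y >= c * (Rabs (x - x0)) ^ 2 * y * y0).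
Proof.
split.
- intros Q x y hQ [hx [hy hxy]].
  unfold Bfun. rewrite Rp32 by lra.
  assert (hS : 1 <= sqrt Q) by (rewrite <- sqrt_1; apply sqrt_le_1_alt; lra).
  assert (hs : sqrt (x*y) <= sqrt Q) by (apply sqrt_le_1_alt; lra).
  assert (hs0 : 0 < sqrt (x*y)) by (apply sqrt_lt_R0; nra).
  replace (128 * Q^2) with (128 * ((sqrt Q)^2)^2) by (rewrite <- sq_eq; lra).
  replace ((x*y)^2) with (((sqrt (x*y))^2)^2) by (rewrite <- sq_eq; nra).
  generalize (sqrt Q) (sqrt (x*y)) hS hs hs0; intros S s h1 h2 h3.
  assert (s^3 <= S^3) by (apply pow_incr; lra).
  assert (0 < s^3) by (apply pow_lt; lra).
  assert (s^3*s <= S^3*s) by (apply Rmult_le_compat_r; lra).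
  assert (S^3*s <= S^3*S) by (apply Rmult_le_compat_l; lra).
  assert (0 <= S^3*s) by nra.
  split; [ | ring_simplify]; nra.
- exists (/4). split; [lra|].
  intros Q x0 y0 x y hQ [hx0 [hy0 h0]] [hx [hy h]].
  unfold BX0. rewrite dBx_val, dBy_val by lra. unfold Bfun.
  rewrite Rp32 by lra.
  rewrite pow2_abs.
  assert (hS : 1 <= sqrt Q) by (rewrite <- sqrt_1; apply sqrt_le_1_alt; lra).
  assert (hs : sqrt (x*y) <= sqrt Q) by (apply sqrt_le_1_alt; lra).
  assert (hs0 : sqrt (x0*y0) <= sqrt Q) by (apply sqrt_le_1_alt; lra).
  rewrite !sqrt_mult by lra. rewrite !sqrt_mult in hs, hs0 by lra.
  assert (pX : 0 < sqrt x) by (apply sqrt_lt_R0; lra).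
  assert (pY : 0 < sqrt y) by (apply sqrt_lt_R0; lra).
  assert (pX0 : 0 < sqrt x0) by (apply sqrt_lt_R0; lra).
  assert (pY0 : 0 < sqrt y0) by (apply sqrt_lt_R0; lra).
  assert (ex : x = sqrt x ^2) by (apply sq_eq; lra).
  assert (ey : y = sqrt y ^2) by (apply sq_eq; lra).
  assert (ex0 : x0 = sqrt x0 ^2) by (apply sq_eq; lra).
  assert (ey0 : y0 = sqrt y0 ^2) by (apply sq_eq; lra).
  generalize dependent (sqrt x); intros X ? ? ?.
  generalize dependent (sqrt y); intros Y ? ? ?.
  generalize dependent (sqrt x0); intros X0 ? ? ?.
  generalize dependent (sqrt y0); intros Y0 ? ? ?.
  generalize dependent (sqrt Q); intros S ? ? ?.
  subst x y x0 y0.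
  assert (ps0 : 0 < X0*Y0) by nra.
  assert (c3 : (X0*Y0)^3 <= S^3) by (apply pow_incr; lra).
  assert (c3' : (X*Y)^3 <= S^3) by (apply pow_incr; nra).
  assert (p3 : 0 < (X0*Y0)^3) by (apply pow_lt; lra).
  set (M := S^3 / (X0*Y0)^3).
  assert (hM : 1 <= M).
  { unfold M. apply (Rmult_le_reg_r ((X0*Y0)^3)); [lra|].
    field_simplify; lra. }
  assert (hg : (X/X0 * (Y/Y0))^3 <= M).
  { unfold M. replace (X/X0 * (Y/Y0)) with ((X*Y)/(X0*Y0)) by (field; lra).
    replace (((X*Y)/(X0*Y0))^3) with ((X*Y)^3 / (X0*Y0)^3) by (field; lra).
    unfold Rdiv. apply Rmult_le_compat_r; [|lra].
    left; apply Rinv_0_lt_compat; lra. }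
  pose proof (key (X/X0) (Y/Y0) M ltac:(apply Rdiv_lt_0_compat; lra)
    ltac:(apply Rdiv_lt_0_compat; lra) hM hg) as K.
  match goal with |- ?A >= ?B =>
    assert (E : A - B = (X0*Y0)^4 * ((64*M*(X/X0-Y/Y0)^2 + ((X/X0*(Y/Y0))^4 + 3
       - 2*(X/X0)^2 - 2*(Y/Y0)^2)) - /4 * (((X/X0)^2-1)*(Y/Y0))^2))
  end.
  { unfold M. field. lra. }
  assert (0 <= (X0*Y0)^4) by (apply pow_le; lra).
  match goal with |- ?A >= ?B =>
    assert (0 <= A - B) by (rewrite E; apply Rmult_le_pos; lra) end.
  lra.
Qed.
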